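(* Let $A=(a_{ij})$ and $B=(b_{ij})$ be two $4\times 4$ generalized tournament matrices with equal corresponding principal minors of orders $2$ and $3$. If $\mathcal{D}(A,B)$ and $\mathcal{E}(A,B)$ are both connected, then there exist a permutation matrix $P$ and real numbers $a,b\in[0,1]\setminus\{1/2\}$ such that $A=PM_{a,b}P^{t}$ and $B=PM_{1-a,b}P^{t}$. Moreover, $\det(A)=\det(B)$ if and only if $a=b$ or $a=1-b$.
   Context: A generalized tournament matrix of order $n$ is a real $n\times n$ matrix $M$ with nonnegative entries satisfying $M+M^{t}=J_n-I_n$. When $A,B$ have the same principal minors of order $2$, for $i\neq j$ one has $a_{ij}=b_{ij}$ or $a_{ij}=1-b_{ij}$; $\mathcal{E}(A,B)$ is the undirected graph on $\{1,2,3,4\}$ whose edges are the pairs $\{i,j\}$ with $a_{ij}=b_{ij}\neq 1/2$, and $\mathcal{D}(A,B)$ is the undirected graph on $\{1,2,3,4\}$ whose edges are the pairs $\{i,j\}$ with $a_{ij}=1-b_{ij}$ and $a_{ij}\neq 1/2$. For real $a,b$, $$M_{a,b}=\begin{pmatrix}0&a&b&b\\ 1-a&0&1-a&b\\ 1-b&a&0&a\\ 1-b&1-b&1-a&0\end{pmatrix}.$$ *)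

(* Defs.v *)
From HB Require Import structures.
From mathcomp Require Import all_boot all_order all_algebra all_fingroup.
Set Implicit Arguments. Unset Strict Implicit. Unset Printing Implicit Defensive.
Import Order.TTheory GRing.Theory Num.Theory.
Local Open Scope ring_scope.

Definition gen_tournament (R : realFieldType) (n : nat) (M : 'M[R]_n) : Prop :=
  (forall i j, 0 <= M i j) /\
  M + M^T = const_mx 1 - 1%:M.

Definition principal_submx (R : realFieldType) (n : nat) (M : 'M[R]_n)
  (S : {set 'I_n}) : 'M[R]_#|S| :=
  mxsub (fun i : 'I_#|S| => enum_val i) (fun i : 'I_#|S| => enum_val i) M.

Definition principal_minor (R : realFieldType) (n : nat) (M : 'M[R]_n)
  (S : {set 'I_n}) : R := \det (principal_submx M S).

Definition same_pm23 (R : realFieldType) (n : nat) (A B : 'M[R]_n) : Prop :=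
  forall S : {set 'I_n}, (#|S| = 2 \/ #|S| = 3)%N ->
    principal_minor A S = principal_minor B S.

Definition E_edge (R : realFieldType) (n : nat) (A B : 'M[R]_n) : rel 'I_n :=
  fun i j => [&& i != j, A i j == B i j & A i j != 2^-1].

Definition D_edge (R : realFieldType) (n : nat) (A B : 'M[R]_n) : rel 'I_n :=
  fun i j => [&& i != j, A i j == 1 - B i j & A i j != 2^-1].

Definition connected_graph (n : nat) (e : rel 'I_n) : Prop :=
  forall i j : 'I_n, connect e i j.

Definition Mab_entry (R : realFieldType) (a b : R) (i j : nat) : R :=
  match i, j with
  | O, 1%N => a     | O, 2%N => b     | O, 3%N => b
  | 1%N, O => 1 - a | 1%N, 2%N => 1 - a | 1%N, 3%N => b
  | 2%N, O => 1 - b | 2%N, 1%N => a     | 2%N, 3%N => a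
  | 3%N, O => 1 - b | 3%N, 1%N => 1 - b | 3%N, 2%N => 1 - a
  | _, _ => 0
  end.

Definition Mab (R : realFieldType) (a b : R) : 'M[R]_4 :=
  \matrix_(i < 4, j < 4) Mab_entry a b i j.

(* Main.v *)
Require Import Defs.
From HB Require Import structures.
From mathcomp Require Import all_boot all_order all_algebra all_fingroup.
From mathcomp Require Import ring lra.
Import Order.TTheory GRing.Theory Num.Theory.
Local Open Scope ring_scope.

Lemma det_sub2 (R : comRingType) n (f : 'I_n -> 'I_4) (M : 'M[R]_4) (H : n = 2%N) :
  \det (mxsub f f M) =
  M (f (cast_ord (esym H) (inord 0))) (f (cast_ord (esym H) (inord 0)))
  * M (f (cast_ord (esym H) (inord 1))) (f (cast_ord (esym H) (inord 1)))
  - M (f (cast_ord (esym H) (inord 0))) (f (cast_ord (esym H) (inord 1)))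
  * M (f (cast_ord (esym H) (inord 1))) (f (cast_ord (esym H) (inord 0))).
Proof.
subst n; rewrite !cast_ord_id.
pose g (k : nat) := f (inord k).
have -> : mxsub f f M = mxsub (fun k : 'I_2 => g k) (fun k : 'I_2 => g k) M.
  by apply/matrixP => a b; rewrite !mxE /g !inord_val.
rewrite (expand_det_row _ ord0) !big_ord_recr big_ord0 /= /cofactor.
rewrite !det_mx11 !mxE /= /g.
ring.
Qed.

Lemma det_sub3 (R : comRingType) n (f : 'I_n -> 'I_4) (M : 'M[R]_4) (H : n = 3%N) :
  let x := f (cast_ord (esym H) (inord 0)) in
  let y := f (cast_ord (esym H) (inord 1)) in
  let z := f (cast_ord (esym H) (inord 2)) in
  \det (mxsub f f M) =
  M x x * M y y * M z z + M x y * M y z * M z x + M x z * M y x * M z y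
  - M x x * M y z * M z y - M x y * M y x * M z z - M x z * M y y * M z x.
Proof.
subst n; rewrite /= !cast_ord_id.
pose g (k : nat) := f (inord k).
have -> : mxsub f f M = mxsub (fun k : 'I_3 => g k) (fun k : 'I_3 => g k) M.
  by apply/matrixP => a b; rewrite !mxE /g !inord_val.
rewrite (expand_det_row _ ord0) !big_ord_recr big_ord0 /= /cofactor.
rewrite !(expand_det_row _ ord0) !big_ord_recr !big_ord0 /= /cofactor.
rewrite !det_mx11 !mxE /= /g.
ring.
Qed.

Lemma pm_gen2 {R : realFieldType} (M : 'M[R]_4) {S : {set 'I_4}} (H : #|S| = 2%N) :
  exists x y, [/\ x \in S, y \in S, x != y &
    principal_minor M S = M x x * M y y - M x y * M y x].
Proof.
rewrite /principal_minor /principal_submx (@det_sub2 _ _ _ _ H).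
exists (enum_val (cast_ord (esym H) (inord 0))), (enum_val (cast_ord (esym H) (inord 1))).
split; rewrite ?enum_valP //.
apply/eqP => /enum_val_inj /cast_ord_inj /(congr1 val) /=.
by rewrite !inordK.
Qed.

Lemma pm_gen3 {R : realFieldType} (M : 'M[R]_4) {S : {set 'I_4}} (H : #|S| = 3%N) :
  exists x y z, [/\ x \in S, y \in S, z \in S, [&& x != y, x != z & y != z] &
    principal_minor M S = 
  M x x * M y y * M z z + M x y * M y z * M z x + M x z * M y x * M z y
  - M x x * M y z * M z y - M x y * M y x * M z z - M x z * M y y * M z x].
Proof.
rewrite /principal_minor /principal_submx (@det_sub3 _ _ _ _ H).
exists (enum_val (cast_ord (esym H) (inord 0))), (enum_val (cast_ord (esym H) (inord 1))), (enum_val (cast_ord (esym H) (inord 2))).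
split; rewrite ?enum_valP //.
by rewrite !(inj_eq enum_val_inj) !(inj_eq (cast_ord_inj (eq_n:=esym H))) -!val_eqE /= !inordK.
Qed.

Definition t3 {R : realFieldType} (M : 'M[R]_4) i j k :=
  M i j * M j k * M k i + M i k * M k j * M j i.

Lemma card3 {i j k : 'I_4} : [&& i != j, i != k & j != k] -> #|[set i; j; k]| = 3%N.
Proof.
case/and3P => ij ik jk.
have -> : [set i; j; k] = i |: [set j; k] by apply/setP => x; rewrite !inE orbA.
by rewrite cardsU1 cards2 !inE negb_or ij ik jk.
Qed.

Lemma pm2 (R : realFieldType) (M : 'M[R]_4) (Md : forall i, M i i = 0) (i j : 'I_4) :
  i != j -> principal_minor M [set i; j] = - (M i j * M j i).
Proof.
move=> ij.
have H : #|[set i; j]| = 2%N by rewrite cards2 ij.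
have [x [y [/set2P hx /set2P hy nxy ->]]] := pm_gen2 M H.
rewrite !Md.
move: nxy; case: hx => ->; case: hy => ->; rewrite ?eqxx // => _; ring.
Qed.

Lemma mem3 {x i j k : 'I_4} : x \in [set i; j; k] -> x = i \/ x = j \/ x = k.
Proof. by rewrite !inE => /orP[/orP[]|] /eqP; auto. Qed.

Lemma pm3 (R : realFieldType) (M : 'M[R]_4) (Md : forall i, M i i = 0) (i j k : 'I_4) :
  [&& i != j, i != k & j != k] -> principal_minor M [set i; j; k] = t3 M i j k.
Proof.
move=> d.
have [x [y [z [hx hy hz nxy ->]]]] := pm_gen3 M (card3 d).
rewrite !Md /t3.
move: d nxy.
case: (mem3 hx) => [->|[->|->]]; case: (mem3 hy) => [->|[->|->]]; case: (mem3 hz) => [->|[->|->]];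
  rewrite ?eqxx ?andbF //= => *; ring.
Qed.


Lemma gtP {R : realFieldType} (M : 'M[R]_4) : gen_tournament M ->
  [/\ forall i, M i i = 0, forall i j, i != j -> M j i = 1 - M i j
    & forall i j, 0 <= M i j <= 1].
Proof.
case=> pos E.
have e i j : M i j + M j i = 1 - (i == j)%:R.
  by have := congr1 (fun X : 'M[R]_4 => X i j) E; rewrite !mxE.
have d i : M i i = 0 by move: (e i i); rewrite eqxx /= => h; lra.
have s i j : i != j -> M j i = 1 - M i j.
  by move=> ij; move: (e i j); rewrite (negbTE ij) /= => h; lra.
split => // i j; case: (eqVneq i j) => [->|ij]; first by rewrite d lexx ler01.
by rewrite pos /=; move: (pos j i); rewrite (s _ _ ij); lra.
Qed.

Lemma half_flip {R : realFieldType} (x : R) : (1 - x == 2^-1) = (x == 2^-1).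
Proof. by apply/eqP/eqP => h; lra. Qed.

Lemma flip_eq {R : realFieldType} (x y : R) : (1 - x == 1 - y) = (x == y).
Proof. by apply/eqP/eqP => h; lra. Qed.

Lemma pair_cases {R : realFieldType} {A B : 'M[R]_4} :
  gen_tournament A -> gen_tournament B -> same_pm23 A B ->
  forall i j, i != j -> B i j = A i j \/ B i j = 1 - A i j.
Proof.
move=> /gtP[dA sA _] /gtP[dB sB _] pm i j ij.
have c2 : #|[set i; j]| = 2%N by rewrite cards2 ij.
have := pm [set i; j] (or_introl c2).
rewrite !pm2 // (sA _ _ ij) (sB _ _ ij) => /oppr_inj h.
have : (B i j - A i j) * (B i j - (1 - A i j)) = A i j * (1 - A i j) - B i j * (1 - B i j) by ring.
rewrite h subrr => /eqP; rewrite mulf_eq0 !subr_eq0 => /orP[]/eqP; auto.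
Qed.

Definition o4 (k : nat) (H : (k < 4)%N) : 'I_4 := Ordinal H.
Definition o3 (k : nat) (H : (k < 3)%N) : 'I_3 := Ordinal H.

Lemma ord4P (i : 'I_4) : i = o4 0 isT \/ i = o4 1 isT \/ i = o4 2 isT \/ i = o4 3 isT.
Proof.
case: i => [[|[|[|[|k]]]] Hi] //; [left|right;left|right;right;left|right;right;right];
  by apply/val_inj.
Qed.

Definition code {R : realFieldType} (A B : 'M[R]_4) (i j : 'I_4) : 'I_3 :=
  if A i j == 2^-1 then o3 0 isT else if A i j == B i j then o3 1 isT else o3 2 isT.

Lemma code_sym {R : realFieldType} {A B : 'M[R]_4} :
  gen_tournament A -> gen_tournament B ->
  forall i j, i != j -> code A B j i = code A B i j.
Proof.
move=> /gtP[dA sA _] /gtP[dB sB _] i j ij.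
by rewrite /code (sA _ _ ij) (sB _ _ ij) half_flip flip_eq.
Qed.


Definition ords4 : seq 'I_4 := [:: o4 0 isT; o4 1 isT; o4 2 isT; o4 3 isT].
Definition ords3 : seq 'I_3 := [:: o3 0 isT; o3 1 isT; o3 2 isT].
Definition cc (c01 c02 c03 c12 c13 c23 : 'I_3) (i j : 'I_4) : 'I_3 :=
  match nat_of_ord i, nat_of_ord j with
  | 0, 1 | 1, 0 => c01
  | 0, 2 | 2, 0 => c02
  | 0, 3 | 3, 0 => c03
  | 1, 2 | 2, 1 => c12
  | 1, 3 | 3, 1 => c13
  | 2, 3 | 3, 2 => c23
  | _, _ => c01
  end%N.
Definition dc (C : 'I_4 -> 'I_4 -> 'I_3) : rel 'I_4 :=
  fun i j => (i != j) && (nat_of_ord (C i j) == 2%N).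
Definition ec (C : 'I_4 -> 'I_4 -> 'I_3) : rel 'I_4 :=
  fun i j => (i != j) && (nat_of_ord (C i j) == 1%N).
Definition step (e : rel 'I_4) (S : seq bool) : seq bool :=
  map (fun y : 'I_4 => nth false S y || has (fun x : 'I_4 => nth false S x && e x y) ords4) ords4.
Definition reach (e : rel 'I_4) (i : 'I_4) : seq bool :=
  iter 3 (step e) (map (fun y : 'I_4 => nat_of_ord y == nat_of_ord i) ords4).
Definition inR e i (y : 'I_4) := nth false (reach e i) y.
Definition closedR (e : rel 'I_4) : bool :=
  all (fun i => inR e i i && all (fun x => all (fun y => inR e i x ==> e x y ==> inR e i y) ords4) ords4) ords4.
Definition conn (e : rel 'I_4) : bool :=
  all (fun i => all (fun j => inR e i j) ords4) ords4.
Definition goodp (C : 'I_4 -> 'I_4 -> 'I_3) (v0 v1 v2 v3 : 'I_4) : bool :=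
  [&& uniq [:: v0; v1; v2; v3],
      nat_of_ord (C v0 v1) == 2%N, nat_of_ord (C v1 v2) == 2%N, nat_of_ord (C v2 v3) == 2%N,
      nat_of_ord (C v0 v2) == 1%N, nat_of_ord (C v0 v3) == 1%N & nat_of_ord (C v1 v3) == 1%N].
Definition good (C : 'I_4 -> 'I_4 -> 'I_3) : bool :=
  has (fun v0 => has (fun v1 => has (fun v2 => has (fun v3 => goodp C v0 v1 v2 v3) ords4) ords4) ords4) ords4.
Definition check : bool :=
  all (fun c01 => all (fun c02 => all (fun c03 => all (fun c12 => all (fun c13 => all (fun c23 =>
    let C := cc c01 c02 c03 c12 c13 c23 in
    [&& closedR (dc C), closedR (ec C) & conn (dc C) ==> conn (ec C) ==> good C]) ords3) ords3) ords3) ords3) ords3) ords3.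
Lemma check_ok : check.
Proof. vm_compute. reflexivity. Qed.

Lemma mem_ords4 x : x \in ords4.
Proof. by case: (ord4P x) => [->|[->|[->|->]]]; rewrite !inE eqxx ?orbT. Qed.
Lemma mem_ords3 (x : 'I_3) : x \in ords3.
Proof.
have: x = o3 0 isT \/ x = o3 1 isT \/ x = o3 2 isT.
  case: x => [[|[|[|k]]] Hi] //; [left|right;left|right;right]; by apply/val_inj.
by case=> [->|[->|->]]; rewrite !inE eqxx ?orbT.
Qed.

Lemma check_spec c01 c02 c03 c12 c13 c23 :
  let C := cc c01 c02 c03 c12 c13 c23 in
  [&& closedR (dc C), closedR (ec C) & conn (dc C) ==> conn (ec C) ==> good C].
Proof.
have := check_ok; rewrite /check.
move=> /allP /(_ c01 (mem_ords3 _)) /allP /(_ c02 (mem_ords3 _)) /allP /(_ c03 (mem_ords3 _)).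
by move=> /allP /(_ c12 (mem_ords3 _)) /allP /(_ c13 (mem_ords3 _)) /allP /(_ c23 (mem_ords3 _)).
Qed.

Lemma connect_inR e i j : closedR e -> connect e i j -> inR e i j.
Proof.
move=> /allP /(_ i (mem_ords4 i)) /andP[ii /allP cl].
have cl' x y : inR e i x -> e x y -> inR e i y.
  move=> hx exy; have := cl x (mem_ords4 x) => /allP /(_ y (mem_ords4 y)).
  by rewrite hx exy.
move=> /connectP[p pth ->].
have gen : forall x, path e x p -> inR e i x -> inR e i (last x p).
  elim: p {pth} => [|y p IH] x //= /andP[exy pth] hx.
  exact: IH pth (cl' _ _ hx exy).
exact: gen pth ii.
Qed.


Definition CC {R : realFieldType} (A B : 'M[R]_4) :=
  cc (code A B (o4 0 isT) (o4 1 isT)) (code A B (o4 0 isT) (o4 2 isT))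
     (code A B (o4 0 isT) (o4 3 isT)) (code A B (o4 1 isT) (o4 2 isT))
     (code A B (o4 1 isT) (o4 3 isT)) (code A B (o4 2 isT) (o4 3 isT)).

Lemma ccE {R : realFieldType} {A B : 'M[R]_4} :
  gen_tournament A -> gen_tournament B ->
  forall i j, i != j -> CC A B i j = code A B i j.
Proof.
move=> gA gB i j.
case: (ord4P i) => [->|[->|[->|->]]]; case: (ord4P j) => [->|[->|[->|->]]] => ij;
  first [ by rewrite eqxx in ij | reflexivity | exact: (code_sym gA gB _ _ ij) ].
Qed.

Lemma D_dc {R : realFieldType} (A B : 'M[R]_4) :
  gen_tournament A -> gen_tournament B -> same_pm23 A B ->
  D_edge A B =2 dc (CC A B).
Proof.
move=> gA gB pm i j; rewrite /D_edge /dc.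
case: (eqVneq i j) => [->|ij] //=.
rewrite (ccE gA gB _ _ ij) /code.
case: ifP => h; first by rewrite andbF.
case: ifP => h2 /=.
  apply/negbTE/andP => -[/eqP h3 _]; move/negP: h; apply; apply/eqP.
  move/eqP: h2 => h2; lra.
case: (pair_cases gA gB pm _ _ ij) => h3; first by rewrite h3 eqxx in h2.
by rewrite h3 opprB addrC subrK eqxx.
Qed.

Lemma E_ec {R : realFieldType} (A B : 'M[R]_4) :
  gen_tournament A -> gen_tournament B -> same_pm23 A B ->
  E_edge A B =2 ec (CC A B).
Proof.
move=> gA gB pm i j; rewrite /E_edge /ec.
case: (eqVneq i j) => [->|ij] //=.
rewrite (ccE gA gB _ _ ij) /code.
case: ifP => h; first by rewrite andbF.
case: ifP => h2 /=; first by rewrite ?h ?andbT.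
by [].
Qed.


Lemma code2 {R : realFieldType} {A B : 'M[R]_4} :
  gen_tournament A -> gen_tournament B -> same_pm23 A B ->
  forall i j, i != j -> nat_of_ord (CC A B i j) == 2%N ->
  A i j != 2^-1 /\ B i j = 1 - A i j.
Proof.
move=> gA gB pm i j ij; rewrite (ccE gA gB _ _ ij) /code.
case: ifP => h; first by [].
case: ifP => h2; first by [].
move=> _; split; first by [].
case: (pair_cases gA gB pm _ _ ij) => // h3.
by rewrite h3 eqxx in h2.
Qed.

Lemma code1 {R : realFieldType} {A B : 'M[R]_4} :
  gen_tournament A -> gen_tournament B ->
  forall i j, i != j -> nat_of_ord (CC A B i j) == 1%N ->
  A i j != 2^-1 /\ B i j = A i j.
Proof.
move=> gA gB i j ij; rewrite (ccE gA gB _ _ ij) /code.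
case: ifP => h; first by [].
case: ifP => /eqP h2; last by [].
by move=> _; split.
Qed.

Lemma sub_eq {R : realFieldType} {L M X : R} : L = M -> X = L - M -> X = 0.
Proof. by move=> -> ->; rewrite subrr. Qed.

Lemma half_mul {R : realFieldType} {p u : R} : p != 2^-1 -> (2 * p - 1) * u = 0 -> u = 0.
Proof.
move=> hp /eqP; rewrite mulf_eq0 => /orP[/eqP h|/eqP //].
by move/negP: hp; case; apply/eqP; lra.
Qed.

Lemma det4 (R : comRingType) (h : nat -> nat -> R) :
  \det (\matrix_(i < 4, j < 4) h i j) =
  0 + h 0%N 0%N * h 1%N 1%N * h 2%N 2%N * h 3%N 3%N
  - h 0%N 0%N * h 1%N 1%N * h 2%N 3%N * h 3%N 2%N
  - h 0%N 0%N * h 1%N 2%N * h 2%N 1%N * h 3%N 3%N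
  + h 0%N 0%N * h 1%N 2%N * h 2%N 3%N * h 3%N 1%N
  + h 0%N 0%N * h 1%N 3%N * h 2%N 1%N * h 3%N 2%N
  - h 0%N 0%N * h 1%N 3%N * h 2%N 2%N * h 3%N 1%N
  - h 0%N 1%N * h 1%N 0%N * h 2%N 2%N * h 3%N 3%N
  + h 0%N 1%N * h 1%N 0%N * h 2%N 3%N * h 3%N 2%N
  + h 0%N 1%N * h 1%N 2%N * h 2%N 0%N * h 3%N 3%N
  - h 0%N 1%N * h 1%N 2%N * h 2%N 3%N * h 3%N 0%N
  - h 0%N 1%N * h 1%N 3%N * h 2%N 0%N * h 3%N 2%N
  + h 0%N 1%N * h 1%N 3%N * h 2%N 2%N * h 3%N 0%N
  + h 0%N 2%N * h 1%N 0%N * h 2%N 1%N * h 3%N 3%N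
  - h 0%N 2%N * h 1%N 0%N * h 2%N 3%N * h 3%N 1%N
  - h 0%N 2%N * h 1%N 1%N * h 2%N 0%N * h 3%N 3%N
  + h 0%N 2%N * h 1%N 1%N * h 2%N 3%N * h 3%N 0%N
  + h 0%N 2%N * h 1%N 3%N * h 2%N 0%N * h 3%N 1%N
  - h 0%N 2%N * h 1%N 3%N * h 2%N 1%N * h 3%N 0%N
  - h 0%N 3%N * h 1%N 0%N * h 2%N 1%N * h 3%N 2%N
  + h 0%N 3%N * h 1%N 0%N * h 2%N 2%N * h 3%N 1%N
  + h 0%N 3%N * h 1%N 1%N * h 2%N 0%N * h 3%N 2%N
  - h 0%N 3%N * h 1%N 1%N * h 2%N 2%N * h 3%N 0%N
  - h 0%N 3%N * h 1%N 2%N * h 2%N 0%N * h 3%N 1%N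
  + h 0%N 3%N * h 1%N 2%N * h 2%N 1%N * h 3%N 0%N.
Proof.
rewrite !(expand_det_row _ ord0) !big_ord_recr big_ord0 /= /cofactor.
rewrite !(expand_det_row _ ord0) !big_ord_recr !big_ord0 /= /cofactor.
rewrite !(expand_det_row _ ord0) !big_ord_recr !big_ord0 /= /cofactor.
rewrite !det_mx11 !mxE /= /bump /addn /addn_rec /=.
Time ring.
Qed.
Lemma detMab (R : realFieldType) (a b : R) :
  \det (Mab a b) - \det (Mab (1 - a) b) = (1 - 2*b)*(2*a-1)*(a-b)*(a+b-1).
Proof. rewrite /Mab !det4 /=. Time ring. Qed.


Theorem lemma4p5 (R : realFieldType) (A B : 'M[R]_4) :
  gen_tournament A -> gen_tournament B ->
  same_pm23 A B ->
  connected_graph (D_edge A B) -> connected_graph (E_edge A B) ->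
  exists (s : 'S_4) (a b : R),
    [/\ 0 <= a <= 1, a != 2^-1, 0 <= b <= 1 & b != 2^-1] /\
    [/\ A = perm_mx s *m Mab a b *m (perm_mx s)^T,
        B = perm_mx s *m Mab (1 - a) b *m (perm_mx s)^T
      & (\det A = \det B <-> a = b \/ a = 1 - b)].
Proof.
move=> gA gB pm cD cE.
have [dA sA bA] := gtP A gA; have [dB sB bB] := gtP B gB.
have /and3P[clD clE imp] : [&& closedR (dc (CC A B)), closedR (ec (CC A B))
   & conn (dc (CC A B)) ==> conn (ec (CC A B)) ==> good (CC A B)] := check_spec _ _ _ _ _ _.
have conD : conn (dc (CC A B)).
  apply/allP => i _; apply/allP => j _; apply: connect_inR clD _.
  by rewrite -(eq_connect (D_dc _ _ gA gB pm)); apply: cD.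
have conE : conn (ec (CC A B)).
  apply/allP => i _; apply/allP => j _; apply: connect_inR clE _.
  by rewrite -(eq_connect (E_ec _ _ gA gB pm)); apply: cE.
move: imp; rewrite conD conE /= => /hasP[v0 _ /hasP[v1 _ /hasP[v2 _ /hasP[v3 _ g]]]].
move: g; rewrite /goodp => /andP[U /andP[c01 /andP[c12 /andP[c23 /andP[c02 /andP[c03 c13]]]]]].
move: (U); rewrite /= !inE !negb_or => /and4P[/and3P[n01 n02 n03] /andP[n12 n13] n23 _].
have [h01 e01] := code2 gA gB pm _ _ n01 c01.
have [h12 e12] := code2 gA gB pm _ _ n12 c12.
have [h23 e23] := code2 gA gB pm _ _ n23 c23.
have [h02 e02] := code1 gA gB _ _ n02 c02.
have [h03 e03] := code1 gA gB _ _ n03 c03.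
have [h13 e13] := code1 gA gB _ _ n13 c13.
have r10 := sA _ _ n01; have r20 := sA _ _ n02; have r30 := sA _ _ n03.
have r21 := sA _ _ n12; have r31 := sA _ _ n13; have r32 := sA _ _ n23.
have q10 := sB _ _ n01; have q20 := sB _ _ n02; have q30 := sB _ _ n03.
have q21 := sB _ _ n12; have q31 := sB _ _ n13; have q32 := sB _ _ n23.
have tri : forall i j k, [&& i != j, i != k & j != k] -> t3 A i j k = t3 B i j k.
  move=> i j k d; rewrite -(pm3 _ _ dA _ _ _ d) -(pm3 _ _ dB _ _ _ d).
  exact: pm _ (or_intror (card3 d)).
have t012 := tri v0 v1 v2 (introT and3P (And3 n01 n02 n12)).
have t123 := tri v1 v2 v3 (introT and3P (And3 n12 n13 n23)).
have t013 := tri v0 v1 v3 (introT and3P (And3 n01 n03 n13)).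
have t023 := tri v0 v2 v3 (introT and3P (And3 n02 n03 n23)).
rewrite /t3 r10 r20 r21 q10 q20 q21 e01 e02 e12 in t012.
rewrite /t3 r21 r31 r32 q21 q31 q32 e12 e13 e23 in t123.
rewrite /t3 r10 r30 r31 q10 q30 q31 e01 e03 e13 in t013.
rewrite /t3 r20 r30 r32 q20 q30 q32 e02 e03 e23 in t023.
have y1 : A v0 v1 + A v1 v2 - 1 = 0.
  apply: (half_mul h02).
  first [apply: (sub_eq t012); ring | apply: (sub_eq (esym t012)); ring].
have z1 : A v1 v2 + A v2 v3 - 1 = 0.
  apply: (half_mul h13).
  first [apply: (sub_eq t123); ring | apply: (sub_eq (esym t123)); ring].
have rq : A v1 v3 - A v0 v3 = 0.
  apply: (half_mul h01).
  first [apply: (sub_eq t013); ring | apply: (sub_eq (esym t013)); ring].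
have pq : A v0 v2 - A v0 v3 = 0.
  apply: (half_mul h23).
  first [apply: (sub_eq t023); ring | apply: (sub_eq (esym t023)); ring].
have ey : A v1 v2 = 1 - A v0 v1 by lra.
have ez : A v2 v3 = A v0 v1 by lra.
have er : A v1 v3 = A v0 v3 by lra.
have ep : A v0 v2 = A v0 v3 by lra.
clear t012 t123 t013 t023 tri.
pose g (k : 'I_4) := nth v0 [:: v0; v1; v2; v3] k.
have g_inj : injective g.
  move=> k l /eqP; rewrite /g (@nth_uniq _ v0 [:: v0; v1; v2; v3] k l (ltn_ord k) (ltn_ord l) U) => /eqP.
  exact: val_inj.
pose s0 := perm g_inj.
pose s := (s0^-1)%g.
have PE (M : 'M[R]_4) : perm_mx s *m M *m (perm_mx s)^T = \matrix_(i, j) M (s i) (s j).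
  by rewrite tr_perm_mx -col_permE -row_permE; apply/matrixP => i j; rewrite !mxE.
have key (M N : 'M[R]_4) : (forall k l, M (g k) (g l) = N k l) ->
   M = perm_mx s *m N *m (perm_mx s)^T.
  move=> H; rewrite PE; apply/matrixP => i j; rewrite mxE.
  rewrite -{1}(permKV s0 i) -{1}(permKV s0 j) !permE.
  exact: H.
have HA : A = perm_mx s *m Mab (A v0 v1) (A v0 v3) *m (perm_mx s)^T.
  apply: key => k l; rewrite /g /Mab mxE.
  case: (ord4P k) => [->|[->|[->|->]]]; case: (ord4P l) => [->|[->|[->|->]]]; rewrite /o4 /=;
    rewrite ?dA ?r10 ?r20 ?r30 ?r21 ?r31 ?r32 ?ey ?ez ?er ?ep; first [reflexivity | ring].
have HB : B = perm_mx s *m Mab (1 - A v0 v1) (A v0 v3) *m (perm_mx s)^T.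
  apply: key => k l; rewrite /g /Mab mxE.
  case: (ord4P k) => [->|[->|[->|->]]]; case: (ord4P l) => [->|[->|[->|->]]]; rewrite /o4 /=;
    rewrite ?dB ?q10 ?q20 ?q30 ?q21 ?q31 ?q32 ?e01 ?e02 ?e03 ?e12 ?e13 ?e23 ?ey ?ez ?er ?ep; first [reflexivity | ring].
exists s, (A v0 v1), (A v0 v3).
split; first by split; rewrite ?bA.
split => //.
have dP : \det (perm_mx s) * \det (perm_mx s)^T = 1 :> R.
  by rewrite det_tr det_perm -signr_addb addbb expr0.
have dEq (M : 'M[R]_4) : \det (perm_mx s *m M *m (perm_mx s)^T) = \det M.
  by rewrite !det_mulmx mulrAC dP mul1r.
rewrite {1}HA {1}HB !dEq.
have D := detMab _ (A v0 v1) (A v0 v3).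
split => [h|[h|h]].
- have : (1 - 2 * A v0 v3) * (2 * A v0 v1 - 1) * (A v0 v1 - A v0 v3) * (A v0 v1 + A v0 v3 - 1) = 0.
    by rewrite -D h subrr.
  move/eqP; rewrite !mulf_eq0 => /orP[/orP[/orP[]|]|] /eqP h'.
  + by move/negP: h03; case; apply/eqP; lra.
  + by move/negP: h01; case; apply/eqP; lra.
  + by left; lra.
  + by right; lra.
- apply/eqP; rewrite -subr_eq0 D h; apply/eqP; ring.
- apply/eqP; rewrite -subr_eq0 D h; apply/eqP; ring.
Qed.
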